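(* For a parameter vector $p=(b,\beta,\beta_1,\gamma,\varepsilon_1,\varepsilon_2,\lambda,\alpha)$ consider the planar system $$s'=b+\gamma+(\varepsilon_2-b-\beta-\gamma)s-\gamma i-\varepsilon_2 s^2+(\varepsilon_1-\varepsilon_2-\lambda)is,$$ $$i'=\beta_1 s+(\varepsilon_2-\varepsilon_1-\alpha-b)i+(\lambda-\varepsilon_2)is+(\varepsilon_1-\varepsilon_2)i^2$$ on $D_1=\{(s,i): s\ge0,\ i\ge0,\ s+i\le1\}$. Let $\Omega\subset\mathbb{R}^8_+$ be the open set of admissible parameter values (all parameters positive and $\beta_2=\beta-\beta_1>0$), and let $\Omega_1\subset\Omega$ be the set of parameter values for which this system has a nonhyperbolic rest point in $D_1$. Then $\Omega_1$ is a closed, nonempty subset of $\Omega$ of Lebesgue measure zero.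
   Context: A rest point is hyperbolic if all eigenvalues of the linearization there have nonzero real parts. The system is the reduction, via $r=1-s-i$, of the SIRS proportions system with birth rate $b$, disease transfer rate $\beta=\beta_1+\beta_2$, recovery rate $\gamma$, excess death rates $\varepsilon_1,\varepsilon_2$, contact rate $\lambda$ and removal rate $\alpha$. *)

(* Defs.v *)
From HB Require Import structures.
From mathcomp Require Import all_boot all_order all_algebra.
From mathcomp Require Import all_classical all_reals.
From mathcomp Require Import topology normedtype derive.
From mathcomp Require Import complex.

Set Implicit Arguments.
Unset Strict Implicit.
Unset Printing Implicit Defensive.

Import Order.TTheory GRing.Theory Num.Theory.
Import numFieldNormedType.Exports.

Local Open Scope classical_set_scope.
Local Open Scope ring_scope.

Section SIRS.
Variable R : realType.

Definition prm (p : 'rV[R]_8) (k : nat) : R := p 0 (inord k).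
Definition pb      p := prm p 0.
Definition pbeta   p := prm p 1.
Definition pbeta1  p := prm p 2.
Definition pgamma  p := prm p 3.
Definition peps1   p := prm p 4.
Definition peps2   p := prm p 5.
Definition plambda p := prm p 6.
Definition palpha  p := prm p 7.

Definition fs (p : 'rV[R]_8) (s i : R) : R :=
  pb p + pgamma p + (peps2 p - pb p - pbeta p - pgamma p) * s
  - pgamma p * i - peps2 p * s ^+ 2
  + (peps1 p - peps2 p - plambda p) * i * s.

Definition fi (p : 'rV[R]_8) (s i : R) : R :=
  pbeta1 p * s + (peps2 p - peps1 p - palpha p - pb p) * i
  + (plambda p - peps2 p) * i * s + (peps1 p - peps2 p) * i ^+ 2.

Definition vf (p : 'rV[R]_8) (a : 'I_2) (s i : R) : R :=
  if a == 0 then fs p s i else fi p s i.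

Definition D1 : set (R * R) := [set x | 0 <= x.1 /\ 0 <= x.2 /\ x.1 + x.2 <= 1].

Definition jac (p : 'rV[R]_8) (s i : R) : 'M[R]_2 :=
  \matrix_(a < 2, b < 2)
    (if b == 0 then derive1 (fun t => vf p a t i) s
               else derive1 (fun t => vf p a s t) i).

Definition rest_point (p : 'rV[R]_8) (s i : R) : Prop :=
  fs p s i = 0 /\ fi p s i = 0.

Definition hyperbolic (p : 'rV[R]_8) (s i : R) : Prop :=
  forall z : R[i], eigenvalue (map_mx (fun x : R => (x%:C)%C) (jac p s i)) z ->
    Re z != 0.

Definition Omega : set 'rV[R]_8 :=
  [set p : 'rV[R]_8 | (forall k : 'I_8, 0 < p 0 k) /\ 0 < pbeta p - pbeta1 p].

Definition Omega1 : set 'rV[R]_8 :=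
  [set p : 'rV[R]_8 | Omega p /\
     exists s i, D1 (s, i) /\ rest_point p s i /\ ~ hyperbolic p s i].

Definition rel_closed (Y A : set 'rV[R]_8) : Prop :=
  A `<=` Y /\ exists C : set 'rV[R]_8, closed C /\ A = Y `&` C.

Definition box (a c : 'rV[R]_8) : set 'rV[R]_8 :=
  [set x : 'rV[R]_8 | forall j : 'I_8, a 0 j <= x 0 j <= c 0 j].

Definition lebesgue_null (A : set 'rV[R]_8) : Prop :=
  forall eps : R, 0 < eps ->
    exists a c : nat -> 'rV[R]_8,
      (forall k (j : 'I_8), a k 0 j <= c k 0 j) /\
      A `<=` \bigcup_k box (a k) (c k) /\
      (forall N : nat, \sum_(k < N) \prod_(j < 8) (c k 0 j - a k 0 j) <= eps).

End SIRS.

(* Main.v *)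
Require Import Defs.
From HB Require Import structures.
From mathcomp Require Import all_boot all_order all_algebra.
From mathcomp Require Import all_classical all_reals.
From mathcomp Require Import topology normedtype derive.
From mathcomp Require Import complex.
From mathcomp Require Import ring lra.

Set Implicit Arguments.
Unset Strict Implicit.
Unset Printing Implicit Defensive.
Import Order.TTheory GRing.Theory Num.Theory.
Import numFieldNormedType.Exports.
Local Open Scope classical_set_scope.
Local Open Scope ring_scope.

Lemma ord2 (j : 'I_2) : j = 0 \/ j = 1.
Proof. case: j => [[|[|//]]] Hj; [left|right]; exact: val_inj. Qed.

Lemma sum2 (V : nmodType) (f : 'I_2 -> V) : \sum_j f j = f 0 + f 1.
Proof. by rewrite big_ord_recl big_ord1; congr (_ + f _); apply: val_inj. Qed.

Lemma row2_mul (F : fieldType) (x y : F) (A : 'M[F]_2) :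
  (\row_(j < 2) (if j == 0 then x else y)) *m A = \row_j (x * A 0 j + y * A 1 j).
Proof.
apply/rowP => j; rewrite !mxE !big_ord_recr big_ord0 /= add0r !mxE /=.
by congr (_ * A _ _ + _ * A _ _); apply: val_inj.
Qed.

Lemma eig22 (F : fieldType) (A : 'M[F]_2) a :
  eigenvalue A a = ((A 0 0 - a) * (A 1 1 - a) - A 0 1 * A 1 0 == 0).
Proof.
set q := (A 0 0 - a) * (A 1 1 - a) - A 0 1 * A 1 0.
apply/eigenvalueP/eqP.
- move=> [v Hv vn0].
  set x := v 0 0; set y := v 0 1.
  have e0 : x * A 0 0 + y * A 1 0 = a * x.
    have := congr1 (fun M : 'M[F]_(1,2) => M 0 0) Hv; by rewrite /= !mxE sum2.
  have e1 : x * A 0 1 + y * A 1 1 = a * y.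
    have := congr1 (fun M : 'M[F]_(1,2) => M 0 1) Hv; by rewrite /= !mxE sum2.
  have hx : x * q = (A 1 1 - a) * (x * A 0 0 + y * A 1 0 - a * x)
                  - A 1 0 * (x * A 0 1 + y * A 1 1 - a * y) by rewrite /q; ring.
  have hy : y * q = (A 0 0 - a) * (x * A 0 1 + y * A 1 1 - a * y)
                  - A 0 1 * (x * A 0 0 + y * A 1 0 - a * x) by rewrite /q; ring.
  rewrite e0 e1 !subrr !mulr0 subr0 in hx hy.
  apply/eqP; apply: contraNT vn0 => qn0; apply/eqP/rowP => j; rewrite mxE.
  case: (ord2 j) => ->.
  + by move/eqP: hx; rewrite mulf_eq0 (negbTE qn0) orbF => /eqP.
  + by move/eqP: hy; rewrite mulf_eq0 (negbTE qn0) orbF => /eqP.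
- move=> hq.
  have mk : forall x y : F, (x != 0) || (y != 0) ->
      x * A 0 0 + y * A 1 0 = a * x -> x * A 0 1 + y * A 1 1 = a * y ->
      exists2 v : 'rV_2, v *m A = a *: v & v != 0.
    move=> x y nz e0 e1; exists (\row_(j < 2) (if j == 0 then x else y)).
      rewrite row2_mul; apply/rowP => j; rewrite !mxE.
      by case: (ord2 j) => -> /=.
    apply: contraTneq nz => /rowP H.
    have := H 0; have := H 1; rewrite !mxE /= => -> ->; by rewrite eqxx.
  case: (eqVneq (A 1 0) 0) => h10.
  + case: (eqVneq a (A 1 1)) => ha.
      apply: (mk 0 1); first by rewrite oner_neq0 orbT.
        by rewrite h10 !(mul0r, mulr0, addr0, mulr1, mul1r).
      by rewrite ha !(mul0r, mulr0, addr0, add0r, mulr1, mul1r).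
    have ha0 : a = A 0 0.
      move: hq; rewrite /q h10 mulr0 subr0 => /eqP; rewrite mulf_eq0 => /orP[/eqP|/eqP].
        by move/eqP; rewrite subr_eq0 => /eqP.
      by move/eqP; rewrite subr_eq0 eq_sym (negbTE ha).
    apply: (mk (A 0 0 - A 1 1) (A 0 1)).
      by rewrite subr_eq0 -ha0 ha.
      by rewrite h10 mulr0 addr0 ha0 mulrC.
      by rewrite ha0; ring.
  + apply: (mk (A 1 0) (a - A 0 0)); first by rewrite h10.
      by ring.
    have : (A 1 0 * A 0 1 + (a - A 0 0) * A 1 1) - a * (a - A 0 0) = - q by rewrite /q; ring.
    by rewrite hq oppr0 => /eqP; rewrite subr_eq0 => /eqP.
Qed.

Section Cplx.
Local Open Scope complex_scope.
Lemma cplx (R : realType) (a b c d y : R) :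
  ((a%:C - (0 +i* y)) * (d%:C - (0 +i* y)) - b%:C * c%:C == 0)
  = ((a*d - b*c - y^+2 == 0) && (y * (a+d) == 0)).
Proof.
rewrite eq_complex /=.
have -> : (a - 0) * (d - 0) - (0 - y) * (0 - y) - (b * c - 0 * 0) = a*d - b*c - y^+2 by ring.
have -> : (a - 0) * (0 - y) + (0 - y) * (d - 0) - (b * 0 + 0 * c) = - (y * (a + d)) by ring.
by rewrite oppr_eq0.
Qed.
End Cplx.

Section Jac.
Variable R : realType.
Implicit Types (p : 'rV[R]_8) (s i : R).

Definition J11 p s i := (peps2 p - pb p - pbeta p - pgamma p) - 2 * peps2 p * s
  + (peps1 p - peps2 p - plambda p) * i.
Definition J12 p s i := - pgamma p + (peps1 p - peps2 p - plambda p) * s.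
Definition J21 p s i := pbeta1 p + (plambda p - peps2 p) * i.
Definition J22 p s i := (peps2 p - peps1 p - palpha p - pb p) + (plambda p - peps2 p) * s
  + 2 * (peps1 p - peps2 p) * i.
Definition Jdet p s i := J11 p s i * J22 p s i - J12 p s i * J21 p s i.
Definition Jtr p s i := J11 p s i + J22 p s i.

Let sc2 : forall k x : R, k *: x = k * x. Proof. by []. Qed.
Let sc : forall k : R, k%:A = k. Proof. by move=> k; rewrite sc2 mulr1. Qed.

Lemma jac00 p s i : jac p s i 0 0 = J11 p s i.
Proof.
rewrite /jac mxE /= /vf /= derive1E /fs.
apply: derive_val; apply: is_derive_eq.
by rewrite ?sc ?sc2 /J11; ring.
Qed.
Lemma jac01 p s i : jac p s i 0 1 = J12 p s i.
Proof.
rewrite /jac mxE /= /vf /= derive1E /fs.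
apply: derive_val; apply: is_derive_eq.
by rewrite ?sc ?sc2 /J12; ring.
Qed.
Lemma jac10 p s i : jac p s i 1 0 = J21 p s i.
Proof.
rewrite /jac mxE /= /vf /= derive1E /fi.
apply: derive_val; apply: is_derive_eq.
by rewrite ?sc ?sc2 /J21; ring.
Qed.
Lemma jac11 p s i : jac p s i 1 1 = J22 p s i.
Proof.
rewrite /jac mxE /= /vf /= derive1E /fi.
apply: derive_val; apply: is_derive_eq.
by rewrite ?sc ?sc2 /J22; ring.
Qed.

Lemma nonhyp_iff p s i : ~ hyperbolic p s i <->
  (Jdet p s i = 0 \/ (Jtr p s i = 0 /\ 0 <= Jdet p s i)).
Proof.
have E : forall z : R[i], eigenvalue (map_mx (fun x : R => (x%:C)%C) (jac p s i)) z =
   (((J11 p s i)%:C - z) * ((J22 p s i)%:C - z) - (J12 p s i)%:C * (J21 p s i)%:C == 0)%C.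
  have M : forall a b, map_mx (fun x : R => (x%:C)%C) (jac p s i) a b = ((jac p s i a b)%:C)%C by move=> a b; rewrite mxE.
  by move=> z; rewrite eig22 !M jac00 jac01 jac10 jac11.
rewrite /hyperbolic; split.
- move=> nh.
  have [z [ez rz]] : exists z, eigenvalue (map_mx (fun x : R => (x%:C)%C) (jac p s i)) z
      /\ Re z = 0.
    apply: contrapT => hn; apply: nh => z ez; apply/eqP => rz; apply: hn; by exists z.
  move: ez; rewrite E; rewrite -complexRe in rz; case: z rz => x y /= [->].
  rewrite cplx => /andP[/eqP hd /eqP ht].
  rewrite /Jdet /Jtr.
  have [y0|yn0] := eqVneq y 0.
    by left; move: hd; rewrite y0 expr0n /= subr0.
  right; split.
    by move/eqP: ht; rewrite mulf_eq0 (negbTE yn0) => /eqP.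
  by move/eqP: hd; rewrite subr_eq0 => /eqP ->; exact: sqr_ge0.
- move=> H hyp.
  have [y [hd ht]] : exists y : R, Jdet p s i - y^+2 = 0 /\ y * Jtr p s i = 0.
    case: H => [->|[ht hd]]; first by exists 0; rewrite expr0n /= subr0 mul0r.
    by exists (Num.sqrt (Jdet p s i)); rewrite sqr_sqrtr // subrr ht mulr0.
  have := hyp (0 +i* y)%C; rewrite E cplx -complexRe /= eqxx.
  by move: hd ht; rewrite /Jdet /Jtr => -> ->; rewrite eqxx => /(_ isT).
Qed.
End Jac.

Section Lip.
Variables (R : realType) (X : Type) (dist : X -> X -> R) (S : set X).

Definition LipB (f : X -> R) := exists M L : R, [/\ 0 <= M, 0 <= L,
  (forall x, S x -> `|f x| <= M) &
  (forall x y, S x -> S y -> `|f x - f y| <= L * dist x y)].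

Lemma LipB_ext f g : (forall x, f x = g x) -> LipB g -> LipB f.
Proof.
move=> e [M [L [M0 L0 hM hL]]]; exists M, L; split => //.
  by move=> x Sx; rewrite e; exact: hM.
by move=> x y Sx Sy; rewrite !e; exact: hL.
Qed.

Lemma LipC c : LipB (fun _ => c).
Proof.
exists `|c|, 0; split.
- exact: normr_ge0.
- exact: lexx.
- by move=> x _; exact: lexx.
- by move=> x y _ _; rewrite subrr normr0 mul0r.
Qed.

Lemma LipBase f M : 0 <= M -> (forall x, S x -> `|f x| <= M) ->
  (forall x y, S x -> S y -> `|f x - f y| <= dist x y) -> LipB f.
Proof.
move=> M0 hM hL; exists M, 1; split => //.
by move=> x y Sx Sy; rewrite mul1r; exact: hL.
Qed.

Lemma LipD f g : LipB f -> LipB g -> LipB (fun x => f x + g x).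
Proof.
move=> [M1 [L1 [M10 L10 hM1 hL1]]] [M2 [L2 [M20 L20 hM2 hL2]]].
exists (M1 + M2), (L1 + L2); split; first exact: addr_ge0; first exact: addr_ge0.
  by move=> x Sx; apply: le_trans (ler_normD _ _) _; apply: lerD; [exact: hM1|exact: hM2].
move=> x y Sx Sy.
have -> : f x + g x - (f y + g y) = (f x - f y) + (g x - g y) by ring.
apply: le_trans (ler_normD _ _) _; rewrite mulrDl.
by apply: lerD; [exact: hL1|exact: hL2].
Qed.

Lemma LipN f : LipB f -> LipB (fun x => - f x).
Proof.
move=> [M [L [M0 L0 hM hL]]]; exists M, L; split => //.
  by move=> x Sx; rewrite normrN; exact: hM.
by move=> x y Sx Sy; rewrite -opprD normrN; exact: hL.
Qed.

Lemma LipM f g : LipB f -> LipB g -> LipB (fun x => f x * g x).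
Proof.
move=> [M1 [L1 [M10 L10 hM1 hL1]]] [M2 [L2 [M20 L20 hM2 hL2]]].
exists (M1 * M2), (M1 * L2 + M2 * L1); split.
- exact: mulr_ge0.
- by apply: addr_ge0; apply: mulr_ge0.
- move=> x Sx; rewrite normrM; apply: ler_pM => //; [exact: hM1|exact: hM2].
- move=> x y Sx Sy.
  have -> : f x * g x - f y * g y = f x * (g x - g y) + (f x - f y) * g y by ring.
  apply: le_trans (ler_normD _ _) _; rewrite !normrM mulrDl -!mulrA.
  apply: lerD.
    by apply: ler_pM => //; [exact: hM1|exact: hL2].
  rewrite [M2 * _]mulrC.
  by apply: ler_pM => //; [exact: hL1|exact: hM2].
Qed.

Lemma LipV f c : 0 < c -> (forall x, S x -> c <= `|f x|) -> LipB f ->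
  LipB (fun x => (f x)^-1).
Proof.
move=> c0 hc [M [L [M0 L0 hM hL]]].
exists c^-1, (L / (c * c)); split.
- by rewrite invr_ge0 ltW.
- by apply: divr_ge0 => //; apply: mulr_ge0; apply: ltW.
- move=> x Sx; rewrite normfV lef_pV2 ?posrE //; first exact: hc.
  by apply: lt_le_trans (hc x Sx).
- move=> x y Sx Sy.
  have fx0 : 0 < `|f x| by apply: lt_le_trans (hc x Sx).
  have fy0 : 0 < `|f y| by apply: lt_le_trans (hc y Sy).
  have fxn : f x != 0 by rewrite -normr_gt0.
  have fyn : f y != 0 by rewrite -normr_gt0.
  have -> : (f x)^-1 - (f y)^-1 = (f y - f x) / (f x * f y) by field; rewrite fxn fyn.
  rewrite normrM normfV normrM distrC.
  have hd := hL x y Sx Sy.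
  have Ld : 0 <= L * dist x y by apply: le_trans hd; exact: normr_ge0.
  rewrite mulrAC; apply: ler_pM => //.
    by rewrite invr_ge0 mulr_ge0.
  rewrite lef_pV2 ?posrE; last by apply: mulr_gt0.
    by apply: ler_pM; [exact: ltW|exact: ltW|exact: hc|exact: hc].
  by apply: mulr_gt0.
Qed.

Lemma LipB_bound f : LipB f -> exists L, 0 <= L /\
  forall x y, S x -> S y -> `|f x - f y| <= L * dist x y.
Proof. by move=> [M [L [_ L0 _ hL]]]; exists L. Qed.

End Lip.

Section Null.
Variable R : realType.

Definition vol (b : 'rV[R]_8 * 'rV[R]_8) := \prod_(j < 8) (b.2 0 j - b.1 0 j).
Definition inbox (b : 'rV[R]_8 * 'rV[R]_8) (x : 'rV[R]_8) :=
  forall j, b.1 0 j <= x 0 j <= b.2 0 j.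
Definition fnull (A : set 'rV[R]_8) := forall eps : R, 0 < eps ->
  exists s : seq ('rV[R]_8 * 'rV[R]_8),
    [/\ (forall b, b \in s -> forall j, b.1 0 j <= b.2 0 j),
        (forall x, A x -> exists2 b, b \in s & inbox b x) &
        \sum_(b <- s) vol b <= eps].

Definition dist7 (x y : 'I_7 -> R) := \sum_j `|x j - y j|.

Lemma dist7_ge0 x y : 0 <= dist7 x y.
Proof. by apply: sumr_ge0 => j _; exact: normr_ge0. Qed.

Lemma null_image (S : set ('I_7 -> R)) (W : R) (Phi : ('I_7 -> R) -> 'rV[R]_8) :
  0 < W -> (forall x, S x -> forall j, 0 <= x j <= W) ->
  (forall k, LipB dist7 S (fun x => Phi x 0 k)) -> fnull (Phi @` S).
Proof.
move=> W0 SW hL eps eps0.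
have [Lk hLk] := choice (fun k => LipB_bound (hL k)).
pose L := \sum_k Lk k.
have L0 : 0 <= L by apply: sumr_ge0 => k _; case: (hLk k).
have hLip : forall k x y, S x -> S y -> `|Phi x 0 k - Phi y 0 k| <= L * dist7 x y.
  move=> k x y Sx Sy; case: (hLk k) => Lk0 /(_ x y Sx Sy) h; apply: le_trans h _.
  apply: ler_wpM2r; first exact: dist7_ge0.
  rewrite /L (bigD1 k) //= lerDl; apply: sumr_ge0 => i _; by case: (hLk i).
pose K := (2 * L * 7%:R * W) ^+ 8.
pose m := Num.truncn (K / eps).
pose n := m.+1.
have n0 : 0 < n%:R :> R by rewrite ltr0n.
pose h := W / n%:R.
have h0 : 0 < h by apply: divr_gt0.
pose r := L * (7%:R * h).
have r0 : 0 <= r by apply: mulr_ge0 => //; apply: mulr_ge0 => //; exact: ltW.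
pose incell (c : {ffun 'I_7 -> 'I_n}) (x : 'I_7 -> R) :=
  forall j, (c j)%:R * h <= x j <= (c j).+1%:R * h.
pose pick c := match pselect (exists x, S x /\ incell c x) with
  | left H => proj1_sig (cid H) | right _ => (fun _ => 0) end.
have pickP : forall c, (exists x, S x /\ incell c x) -> S (pick c) /\ incell c (pick c).
  move=> c H; rewrite /pick; case: pselect => // H'; by case: cid.
pose box c := (Phi (pick c) - const_mx r, Phi (pick c) + const_mx r).
exists [seq box c | c <- enum {ffun 'I_7 -> 'I_n}]; split.
- move=> b /mapP [c _ ->] j; rewrite !mxE /=; lra.
- move=> _ [x Sx <-].
  pose c := [ffun j => (inord (minn (Num.truncn (x j / h)) m) : 'I_n)].
  have incx : incell c x.
    move=> j; rewrite ffunE inordK; last by rewrite ltnS geq_minr.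
    have [xj0 xjW] := andP (SW x Sx j).
    have y0 : 0 <= x j / h by apply: divr_ge0 => //; exact: ltW.
    have yn : x j / h <= n%:R.
      by rewrite ler_pdivrMr // /h mulrC mulfVK ?gt_eqF.
    have xe : x j = x j / h * h by rewrite mulfVK ?gt_eqF.
    have [t1 t2] := andP (truncn_itv y0).
    rewrite [X in _ <= X <= _]xe; apply/andP; split.
      apply: ler_wpM2r; first exact: ltW.
      apply: le_trans t1; rewrite ler_nat; exact: geq_minl.
    apply: ler_wpM2r; first exact: ltW.
    case: (leqP (Num.truncn (x j / h)) m) => tm.
      exact: ltW.
    exact: yn.
  have [Sp ip] := pickP c (ex_intro _ x (conj Sx incx)).
  exists (box c); first by apply: map_f; rewrite mem_enum.
  have dx : dist7 x (pick c) <= 7%:R * h.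
    rewrite /dist7 (_ : 7%:R * h = \sum_(j < 7) h); last by rewrite sumr_const card_ord mulr_natl.
    apply: ler_sum => j _.
    have [a1 a2] := andP (incx j); have [b1 b2] := andP (ip j).
    rewrite -natr1 mulrDl mul1r in a2 b2.
    rewrite ler_norml; apply/andP; split; lra.
  move=> k; rewrite /box !mxE /=.
  have := hLip k x (pick c) Sx Sp.
  have : L * dist7 x (pick c) <= r by apply: ler_wpM2l.
  move=> h1 h2; have h3 := le_trans h2 h1.
  rewrite ler_norml in h3; case/andP: h3 => h3 h4; apply/andP; split; lra.
- rewrite big_map big_enum /=.
  have -> : \sum_(i in {ffun 'I_7 -> 'I_n}) vol (box i) = \sum_(i in {ffun 'I_7 -> 'I_n}) (2 * r) ^+ 8.
    apply: eq_bigr => c _; apply: etrans (_ : \prod_(j < 8) (2 * r) = _); last by rewrite prodr_const card_ord.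
    rewrite /vol; apply: eq_bigr => j _; rewrite !mxE /=; ring.
  rewrite sumr_const card_ffun !card_ord -[X in X <= _]mulr_natr natrX.
  have -> : (2 * r) ^+ 8 * n%:R ^+ 7 = K / n%:R.
    by rewrite /r /h /K; field; rewrite gt_eqF.
  rewrite ler_pdivrMr //.
  have := truncnS_gt (K / eps); rewrite -/m => hm.
  rewrite mulrC -ler_pdivrMr //; exact: ltW.
Qed.


Lemma fnull_sub (A B : set 'rV[R]_8) : A `<=` B -> fnull B -> fnull A.
Proof.
move=> AB hB eps e0; have [s [h1 h2 h3]] := hB eps e0; exists s; split => //.
by move=> x /AB; exact: h2.
Qed.

Lemma fnullU (A B : set 'rV[R]_8) : fnull A -> fnull B -> fnull (A `|` B).
Proof.
move=> hA hB eps e0.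
have e20 : 0 < eps / 2 by apply: divr_gt0.
have [s [s1 s2 s3]] := hA _ e20; have [t [t1 t2 t3]] := hB _ e20.
exists (s ++ t); split.
- by move=> b; rewrite mem_cat => /orP[/s1|/t1].
- move=> x [/s2 [b bs hb]|/t2 [b bt hb]]; exists b => //; by rewrite mem_cat ?bs ?bt ?orbT.
- rewrite big_cat /=; apply: le_trans (lerD s3 t3) _; lra.
Qed.

Lemma geom_sum (eps : R) N : \sum_(m < N) eps / 2 ^+ m.+1 = eps - eps / 2 ^+ N.
Proof.
elim: N => [|N IH]; first by rewrite big_ord0 expr0 divr1 subrr.
rewrite big_ord_recr /= IH exprS; field.
by rewrite expf_neq0 // pnatr_eq0.
Qed.

Lemma vol_ge0 (b : 'rV[R]_8 * 'rV[R]_8) : (forall j, b.1 0 j <= b.2 0 j) -> 0 <= vol b.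
Proof. by move=> h; apply: prodr_ge0 => j _; rewrite subr_ge0. Qed.

Lemma psum_le (s : seq ('rV[R]_8 * 'rV[R]_8)) z N :
  (N <= size s)%N -> (forall b, b \in s -> 0 <= vol b) ->
  \sum_(k < N) vol (nth z s k) <= \sum_(b <- s) vol b.
Proof.
move=> Ns hs; rewrite (big_nth z) -(big_mkord xpredT (fun k => vol (nth z s k))).
rewrite [X in _ <= X](@big_cat_nat _ _ _ N) //= lerDl.
rewrite big_geq_mkord; apply: sumr_ge0 => k /andP[hk _]; apply: hs; apply: mem_nth; exact: ltn_ord.
Qed.

Lemma fnull_bigcup (A : nat -> set 'rV[R]_8) :
  (forall m, fnull (A m)) -> lebesgue_null (\bigcup_m A m).
Proof.
move=> hA eps e0.
have hA' : forall m, exists s : seq ('rV[R]_8 * 'rV[R]_8),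
    [/\ (forall b, b \in s -> forall j, b.1 0 j <= b.2 0 j),
        (forall x, A m x -> exists2 b, b \in s & inbox b x) &
        \sum_(b <- s) vol b <= eps / 2 ^+ m.+1].
  move=> m; apply: hA; apply: divr_gt0 => //; exact: exprn_gt0.
have [sq hsq] := choice hA'.
pose z : 'rV[R]_8 * 'rV[R]_8 := (0, 0).
pose t m := z :: sq m.
pose F T := flatten [seq t m | m <- iota 0 T].
have FS : forall T, F T.+1 = F T ++ t T.
  move=> T; rewrite /F; have -> : iota 0 T.+1 = iota 0 T ++ [:: T] by rewrite -addn1 iotaD.
  by rewrite map_cat flatten_cat /= cats0.
have Fpre : forall T d, exists r, F (T + d)%N = F T ++ r.
  move=> T; elim=> [|d [r IH]]; first by exists [::]; rewrite addn0 cats0.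
  by exists (r ++ t (T + d)%N); rewrite addnS FS IH catA.
have Fsize : forall T, (T <= size (F T))%N.
  elim=> [//|T IH]; rewrite FS size_cat /= addnS ltnS; exact: leq_trans IH (leq_addr _ _).
have Fnth : forall k T, (k < T)%N -> nth z (F T) k = nth z (F k.+1) k.
  move=> k T kT; have [r e] := Fpre k.+1 (T - k.+1)%N.
  by rewrite subnKC // in e; rewrite e nth_cat (leq_trans (ltnSn k) (Fsize _)).
pose a k := (nth z (F k.+1) k).1.
pose c k := (nth z (F k.+1) k).2.
have vz : vol z = 0 by rewrite /vol big_ord_recl /= !mxE subrr mul0r.
have inF : forall T b, b \in F T -> b = z \/ exists m, b \in sq m.
  move=> T b /flattenP [l /mapP [m _ ->]]; rewrite inE => /orP [/eqP ->|bm].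
    by left.
  by right; exists m.
have boxok : forall T b, b \in F T -> forall j, b.1 0 j <= b.2 0 j.
  move=> T b /inF [-> j|[m bm]]; first by rewrite /= !mxE.
  by case: (hsq m) => h1 _ _; exact: h1.
exists a, c; split; [|split].
- move=> k j; apply: (boxok k.+1); apply: mem_nth; exact: leq_trans (ltnSn k) (Fsize _).
- move=> x [m _ Amx]; case: (hsq m) => _ h2 _; have [b bs hb] := h2 x Amx.
  have bF : b \in F m.+1 by rewrite FS mem_cat /t inE bs !orbT.
  pose k := index b (F m.+1).
  have kF : (k < size (F m.+1))%N by rewrite index_mem.
  exists k => //.
  have e : nth z (F k.+1) k = b.
    rewrite -(Fnth k (maxn m.+1 k.+1)); last by rewrite leq_max ltnSn orbT.
    have [r e] := Fpre m.+1 (maxn m.+1 k.+1 - m.+1)%N; rewrite subnKC ?leq_maxl // in e.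
    by rewrite e nth_cat kF nth_index.
  by move=> j; rewrite /a /c e; exact: hb j.
- move=> N.
  have -> : \sum_(k < N) \prod_(j < 8) (c k 0 j - a k 0 j) = \sum_(k < N) vol (nth z (F N) k).
    by apply: eq_bigr => k _; rewrite /vol Fnth.
  apply: le_trans (psum_le z (Fsize N) _) _.
    move=> b bF; apply: vol_ge0; exact: boxok bF.
  rewrite /F big_flatten big_map /=.
  apply: le_trans (_ : \sum_(m <- iota 0 N) eps / 2 ^+ m.+1 <= _).
    apply: ler_sum => m _; rewrite big_cons vz add0r; by case: (hsq m).
  have := geom_sum eps N; rewrite -(big_mkord xpredT (fun m => eps / 2 ^+ m.+1)).
  rewrite /index_iota subn0 => ->.
  rewrite lerBlDr lerDl; apply: divr_ge0; [exact: ltW|exact: exprn_ge0].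
Qed.
End Null.

Section Cover.
Variable R : realType.

Definition mkp (a0 a1 a2 a3 a4 a5 a6 a7 : R) : 'rV[R]_8 :=
  \row_(k < 8) nth 0 [:: a0; a1; a2; a3; a4; a5; a6; a7] k.

Lemma mkp_eta (p : 'rV[R]_8) :
  p = mkp (pb p) (pbeta p) (pbeta1 p) (pgamma p) (peps1 p) (peps2 p) (plambda p) (palpha p).
Proof.
apply/rowP => k; rewrite mxE.
rewrite /pb /pbeta /pbeta1 /pgamma /peps1 /peps2 /plambda /palpha /prm.
have -> : (0 : 'I_1) = ord0 by apply: val_inj.
by case: k => [[|[|[|[|[|[|[|[|//]]]]]]]] hk] /=; congr (p _ _); apply: val_inj; rewrite /= inordK.
Qed.

Lemma mkp_Lip (X : Type) (d : X -> X -> R) (S : set X) (f0 f1 f2 f3 f4 f5 f6 f7 : X -> R) :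
  LipB d S f0 -> LipB d S f1 -> LipB d S f2 -> LipB d S f3 ->
  LipB d S f4 -> LipB d S f5 -> LipB d S f6 -> LipB d S f7 ->
  forall k, LipB d S (fun x => mkp (f0 x) (f1 x) (f2 x) (f3 x) (f4 x) (f5 x) (f6 x) (f7 x) 0 k).
Proof.
move=> h0 h1 h2 h3 h4 h5 h6 h7 k.
case: k => [[|[|[|[|[|[|[|[|//]]]]]]]] hk];
 [apply: (LipB_ext _ h0)|apply: (LipB_ext _ h1)|apply: (LipB_ext _ h2)|apply: (LipB_ext _ h3)
 |apply: (LipB_ext _ h4)|apply: (LipB_ext _ h5)|apply: (LipB_ext _ h6)|apply: (LipB_ext _ h7)];
 by move=> x; rewrite mxE.
Qed.

Definition J11s (b g e2 s i : R) := - (b + g * (1 - i)) / s - e2 * s.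
Definition E1A (b b1 g e2 s i : R) := e2 + ((b + g * (1 - i)) / s + e2 * s + b1 * s / i) / i.
Definition J21s (b1 e2 l i : R) := b1 + (l - e2) * i.
Definition c1f (b b1 g e2 l s i : R) := J11s b g e2 s i * i - s * J21s b1 e2 l i.
Definition c0f (b b1 g e2 l s i : R) :=
  J11s b g e2 s i * (- (b1 * s / i) - e2 * i) + (g + (e2 + l) * s) * J21s b1 e2 l i.
Definition E1B (b b1 g e2 l s i : R) := - c0f b b1 g e2 l s i / c1f b b1 g e2 l s i.
Definition LC (b b1 g e2 s i : R) := e2 + (J11s b g e2 s i * i - s * b1) / (s * i).
Definition Bf (b g e1 e2 l s i : R) :=
  (b * (1 - s) + g * (1 - s - i) + e2 * s * (1 - s - i)) / s + (e1 - l) * i.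
Definition Af (b b1 e1 e2 l s i : R) :=
  b1 * s / i + (e2 - e1 - b) + (l - e2) * s + (e1 - e2) * i.

Definition X (x : 'I_7 -> R) (k : nat) := x (inord k).

Definition PhiA x := mkp (X x 0)
  (Bf (X x 0) (X x 2) (E1A (X x 0) (X x 1) (X x 2) (X x 3) (X x 5) (X x 6)) (X x 3) (X x 4) (X x 5) (X x 6))
  (X x 1) (X x 2) (E1A (X x 0) (X x 1) (X x 2) (X x 3) (X x 5) (X x 6)) (X x 3) (X x 4)
  (Af (X x 0) (X x 1) (E1A (X x 0) (X x 1) (X x 2) (X x 3) (X x 5) (X x 6)) (X x 3) (X x 4) (X x 5) (X x 6)).

Definition PhiB x := mkp (X x 0)
  (Bf (X x 0) (X x 2) (E1B (X x 0) (X x 1) (X x 2) (X x 3) (X x 4) (X x 5) (X x 6)) (X x 3) (X x 4) (X x 5) (X x 6))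
  (X x 1) (X x 2) (E1B (X x 0) (X x 1) (X x 2) (X x 3) (X x 4) (X x 5) (X x 6)) (X x 3) (X x 4)
  (Af (X x 0) (X x 1) (E1B (X x 0) (X x 1) (X x 2) (X x 3) (X x 4) (X x 5) (X x 6)) (X x 3) (X x 4) (X x 5) (X x 6)).

Definition PhiC x := mkp (X x 0)
  (Bf (X x 0) (X x 2) (X x 4) (X x 3) (LC (X x 0) (X x 1) (X x 2) (X x 3) (X x 5) (X x 6)) (X x 5) (X x 6))
  (X x 1) (X x 2) (X x 4) (X x 3) (LC (X x 0) (X x 1) (X x 2) (X x 3) (X x 5) (X x 6))
  (Af (X x 0) (X x 1) (X x 4) (X x 3) (LC (X x 0) (X x 1) (X x 2) (X x 3) (X x 5) (X x 6)) (X x 5) (X x 6)).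

Definition Sbase (m : nat) (x : 'I_7 -> R) :=
  [/\ forall j, 0 <= x j <= m.+1%:R, m.+1%:R^-1 <= X x 5 & m.+1%:R^-1 <= X x 6].
Definition SB (m : nat) (x : 'I_7 -> R) := Sbase m x /\
  m.+1%:R^-1 <= `|c1f (X x 0) (X x 1) (X x 2) (X x 3) (X x 4) (X x 5) (X x 6)|.

Section LipS.
Variables (m : nat) (S : set ('I_7 -> R)).
Hypothesis hS : forall x, S x -> Sbase m x.

Lemma LipXk k : LipB (@dist7 R) S (fun x => X x k).
Proof.
apply: (@LipBase _ _ _ _ _ m.+1%:R) => //.
  move=> x /hS [h _ _]; have /andP[h1 h2] := h (inord k); rewrite ger0_norm //.
move=> x y _ _; rewrite /dist7 (bigD1 (inord k)) //= lerDl.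
by apply: sumr_ge0 => j _; exact: normr_ge0.
Qed.

Lemma Lip_inv k : (k = 5 \/ k = 6)%N -> LipB (@dist7 R) S (fun x => (X x k)^-1).
Proof.
move=> hk; apply: (@LipV _ _ _ _ _ (m.+1%:R^-1)) => //.
- by rewrite invr_gt0 ltr0n.
- move=> x /hS [_ h5 h6]; case: hk => ->.
    by apply: (le_trans h5); exact: ler_norm.
  by apply: (le_trans h6); exact: ler_norm.
- exact: LipXk.
Qed.
End LipS.

Ltac lipt hX hI5 hI6 :=
  repeat first [ apply: LipC | apply: LipD | apply: LipN | apply: LipM
               | apply: hI5 | apply: hI6 | apply: hX ].

Lemma fnullA m : fnull (PhiA @` Sbase m).
Proof.
apply: (@null_image _ _ m.+1%:R); first by rewrite ltr0n.
  by move=> x [h _ _].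
have hX := @LipXk m (Sbase m) (fun x h => h).
have hI5 := @Lip_inv m (Sbase m) (fun x h => h) 5 (or_introl erefl).
have hI6 := @Lip_inv m (Sbase m) (fun x h => h) 6 (or_intror erefl).
apply: mkp_Lip; rewrite /Bf /Af /E1A; lipt hX hI5 hI6.
Qed.

Lemma fnullC m : fnull (PhiC @` Sbase m).
Proof.
apply: (@null_image _ _ m.+1%:R); first by rewrite ltr0n.
  by move=> x [h _ _].
have hX := @LipXk m (Sbase m) (fun x h => h).
have hI5 := @Lip_inv m (Sbase m) (fun x h => h) 5 (or_introl erefl).
have hI6 := @Lip_inv m (Sbase m) (fun x h => h) 6 (or_intror erefl).
have hI56 : LipB (@dist7 R) (Sbase m) (fun x => (X x 5 * X x 6)^-1).
  apply: LipB_ext; last by apply: LipM; [exact: hI5|exact: hI6].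
  by move=> x /=; rewrite invfM.
apply: mkp_Lip; rewrite /Bf /Af /LC /J11s; lipt hX hI5 hI6; apply: hI56.
Qed.

Lemma fnullB m : fnull (PhiB @` SB m).
Proof.
apply: (@null_image _ _ m.+1%:R); first by rewrite ltr0n.
  by move=> x [[h _ _] _].
have hS : forall x, SB m x -> Sbase m x by move=> x [].
have hX := @LipXk m (SB m) hS.
have hI5 := @Lip_inv m (SB m) hS 5 (or_introl erefl).
have hI6 := @Lip_inv m (SB m) hS 6 (or_intror erefl).
have hc1 : LipB (@dist7 R) (SB m)
   (fun x => c1f (X x 0) (X x 1) (X x 2) (X x 3) (X x 4) (X x 5) (X x 6)).
  rewrite /c1f /J11s /J21s; lipt hX hI5 hI6.
have hIc : LipB (@dist7 R) (SB m)
   (fun x => (c1f (X x 0) (X x 1) (X x 2) (X x 3) (X x 4) (X x 5) (X x 6))^-1).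
  apply: (@LipV _ _ _ _ _ (m.+1%:R^-1)) => //; first by rewrite invr_gt0 ltr0n.
  by move=> x [].
apply: mkp_Lip; rewrite /Bf /Af /E1B /c0f /J11s /J21s; lipt hX hI5 hI6; apply: hIc.
Qed.

Lemma Xnth (l : seq R) k : (k < 7)%N -> X (fun j : 'I_7 => nth 0 l j) k = nth 0 l k.
Proof. by move=> hk; rewrite /X inordK. Qed.

Lemma cover (p : 'rV[R]_8) : Omega1 p ->
  exists m, ((PhiA @` Sbase m) `|` (PhiB @` SB m) `|` (PhiC @` Sbase m)) p.
Proof.
move=> [[hpos hbb] [s [i [hD [[efs efi] nh]]]]].
move: hD; rewrite /D1 /= => -[s0 [i0 si1]].
have b0 : 0 < pb p := hpos _.
have be0 : 0 < pbeta p := hpos _.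
have b10 : 0 < pbeta1 p := hpos _.
have g0 : 0 < pgamma p := hpos _.
have e10 : 0 < peps1 p := hpos _.
have e20 : 0 < peps2 p := hpos _.
have l0 : 0 < plambda p := hpos _.
have a0 : 0 < palpha p := hpos _.
have ip : 0 < i.
  rewrite lt_neqAle i0 andbT; apply/eqP => i_0.
  have h1 : pbeta1 p * s = 0 by rewrite -efi /fi -i_0; ring.
  move/eqP: h1; rewrite mulf_eq0 gt_eqF //= => /eqP s_0.
  have : pb p + pgamma p = 0 by rewrite -efs /fs -i_0 s_0; ring.
  lra.
have sp : 0 < s.
  rewrite lt_neqAle s0 andbT; apply/eqP => s_0.
  have h1 : pb p + pgamma p * (1 - i) = 0 by rewrite -efs /fs -s_0; ring.
  have : 0 <= pgamma p * (1 - i) by apply: mulr_ge0; lra.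
  lra.
have sn : s != 0 by rewrite gt_eqF.
have inz : i != 0 by rewrite gt_eqF.
have eB : pbeta p = Bf (pb p) (pgamma p) (peps1 p) (peps2 p) (plambda p) s i.
  have : Bf (pb p) (pgamma p) (peps1 p) (peps2 p) (plambda p) s i = pbeta p + fs p s i / s.
    by rewrite /Bf /fs; field.
  by rewrite efs mul0r addr0.
have eA : palpha p = Af (pb p) (pbeta1 p) (peps1 p) (peps2 p) (plambda p) s i.
  have : Af (pb p) (pbeta1 p) (peps1 p) (peps2 p) (plambda p) s i = palpha p + fi p s i / i.
    by rewrite /Af /fi; field.
  by rewrite efi mul0r addr0.
have eJ11 : J11 p s i = J11s (pb p) (pgamma p) (peps2 p) s i.
  have : J11 p s i = J11s (pb p) (pgamma p) (peps2 p) s i + fs p s i / s.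
    by rewrite /J11 /J11s /fs; field.
  by rewrite efs mul0r addr0.
have eJ22 : J22 p s i = - (pbeta1 p * s / i) + (peps1 p - peps2 p) * i.
  have : J22 p s i = - (pbeta1 p * s / i) + (peps1 p - peps2 p) * i + fi p s i / i.
    by rewrite /J22 /fi; field.
  by rewrite efi mul0r addr0.
have eq_p : p = mkp (pb p) (Bf (pb p) (pgamma p) (peps1 p) (peps2 p) (plambda p) s i)
   (pbeta1 p) (pgamma p) (peps1 p) (peps2 p) (plambda p)
   (Af (pb p) (pbeta1 p) (peps1 p) (peps2 p) (plambda p) s i).
  by rewrite {1}[p]mkp_eta -eB -eA.
set c1 := c1f (pb p) (pbeta1 p) (pgamma p) (peps2 p) (plambda p) s i.
pose V := pb p + pbeta1 p + pgamma p + peps1 p + peps2 p + plambda p + s + i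
  + s^-1 + i^-1 + `|c1|^-1.
have sI : 0 < s^-1 by rewrite invr_gt0.
have iI : 0 < i^-1 by rewrite invr_gt0.
have cI : 0 <= `|c1|^-1 by rewrite invr_ge0.
pose m := Num.truncn V.
have hm : V < m.+1%:R by exact: truncnS_gt.
have m0 : 0 < m.+1%:R :> R by rewrite ltr0n.
have invle : forall y : R, 0 < y -> y^-1 < m.+1%:R -> m.+1%:R^-1 <= y.
  move=> y y0 hy; rewrite -[X in _ <= X]invrK lef_pV2 ?posrE ?invr_gt0 //; exact: ltW.
have hs : m.+1%:R^-1 <= s by apply: invle => //; rewrite /V in hm; lra.
have hi : m.+1%:R^-1 <= i by apply: invle => //; rewrite /V in hm; lra.
have Sb : forall l : seq R, size l = 7%N -> (forall y, y \in l -> 0 <= y <= V) ->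
    nth 0 l 5 = s -> nth 0 l 6 = i -> Sbase m (fun j : 'I_7 => nth 0 l j).
  move=> l hl hy h5 h6; split; last 2 first.
  - by rewrite Xnth // h5.
  - by rewrite Xnth // h6.
  move=> j; have := hy (nth 0 l j); rewrite mem_nth ?hl // => /(_ isT) /andP[y1 y2].
  by rewrite y1 /=; apply: ltW; exact: le_lt_trans hm.
have hV : forall y, y \in [:: pb p; pbeta1 p; pgamma p; peps2 p; plambda p; s; i] ->
    0 <= y <= V.
  move=> y; rewrite !inE => /orP[/eqP->|/orP[/eqP->|/orP[/eqP->|/orP[/eqP->|/orP[/eqP->|
    /orP[/eqP->|/eqP->]]]]]]; rewrite /V; apply/andP; split; lra.
have hV' : forall y, y \in [:: pb p; pbeta1 p; pgamma p; peps2 p; peps1 p; s; i] ->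
    0 <= y <= V.
  move=> y; rewrite !inE => /orP[/eqP->|/orP[/eqP->|/orP[/eqP->|/orP[/eqP->|/orP[/eqP->|
    /orP[/eqP->|/eqP->]]]]]]; rewrite /V; apply/andP; split; lra.
exists m.
have [hdet|[htr _]] := (nonhyp_iff p s i).1 nh.
- have eD : Jdet p s i = c0f (pb p) (pbeta1 p) (pgamma p) (peps2 p) (plambda p) s i + c1 * peps1 p.
    by rewrite /Jdet eJ11 eJ22 /c1 /c0f /c1f /J12 /J21 /J21s; field.
  have [c10|c1n] := eqVneq c1 0.
  + right.
    have eL : plambda p = LC (pb p) (pbeta1 p) (pgamma p) (peps2 p) s i.
      have : LC (pb p) (pbeta1 p) (pgamma p) (peps2 p) s i = plambda p + c1 / (s * i).
        by rewrite /LC /c1 /c1f /J21s; field; rewrite inz sn.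
      by rewrite c10 mul0r addr0.
    exists (fun j : 'I_7 => nth 0 [:: pb p; pbeta1 p; pgamma p; peps2 p; peps1 p; s; i] j).
      by apply: Sb.
    by rewrite /PhiC !Xnth //= -eL -eq_p.
  + left; right.
    have e1 : peps1 p = E1B (pb p) (pbeta1 p) (pgamma p) (peps2 p) (plambda p) s i.
      rewrite /E1B -/c1; move: eD; rewrite hdet => /eqP; rewrite eq_sym addr_eq0 => /eqP ->.
      by rewrite opprK mulrC mulKf.
    exists (fun j : 'I_7 => nth 0 [:: pb p; pbeta1 p; pgamma p; peps2 p; plambda p; s; i] j).
      split; first by apply: Sb.
      rewrite !Xnth //= -/c1; apply: invle; first by rewrite normr_gt0.
      by rewrite /V in hm; lra.
    by rewrite /PhiB !Xnth //= -e1 -eq_p.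
- left; left.
  have e1 : peps1 p = E1A (pb p) (pbeta1 p) (pgamma p) (peps2 p) s i.
    have : E1A (pb p) (pbeta1 p) (pgamma p) (peps2 p) s i = peps1 p - Jtr p s i / i.
      by rewrite /Jtr eJ11 eJ22 /E1A /J11s; field; rewrite inz sn.
    by rewrite htr mul0r subr0.
  exists (fun j : 'I_7 => nth 0 [:: pb p; pbeta1 p; pgamma p; peps2 p; plambda p; s; i] j).
    by apply: Sb.
  by rewrite /PhiA !Xnth //= -e1 -eq_p.
Qed.

Lemma null_Omega1 : lebesgue_null (@Omega1 R).
Proof.
have h := fnull_bigcup (fun m => fnullU (fnullU (fnullA m) (fnullB m)) (fnullC m)).
move=> eps e0; have [a [c [h1 [h2 h3]]]] := h eps e0.
exists a, c; split => //; split => // p /cover [m hm]; apply: h2; by exists m.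
Qed.

End Cover.

Section Closed.
Variable R : realType.

Lemma le_small (a b : R) : (forall e, 0 < e -> a <= b + e) -> a <= b.
Proof.
move=> h; rewrite leNgt; apply/negP => ba.
have := h ((a - b) / 2); rewrite ?divr_gt0 ?subr_gt0 // => /(_ isT); lra.
Qed.

Lemma eq0_small (z : R) : (forall d, 0 < d -> `|z| <= d) -> z = 0.
Proof.
move=> h; apply/normr0_eq0/eqP; rewrite eq_le normr_ge0 andbT.
by apply: le_small => e e0; rewrite add0r; exact: h.
Qed.

Lemma cond_closed (d t : R) :
  (forall e, 0 < e -> exists d' t', [/\ `|d' - d| <= e, `|t' - t| <= e &
     (d' = 0 \/ (t' = 0 /\ 0 <= d'))]) ->
  d = 0 \/ (t = 0 /\ 0 <= d).
Proof.
move=> h; have [->|dn] := eqVneq d 0; first by left.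
right.
have d2 : 0 < `|d| / 2 by apply: divr_gt0 => //; rewrite normr_gt0.
have key : forall e, 0 < e -> exists d' t', [/\ `|d' - d| <= e, `|t' - t| <= e, t' = 0 & 0 <= d'].
  move=> e e0; have m0 : 0 < Num.min e (`|d| / 2) by rewrite lt_min e0 d2.
  have [d' [t' [h1 h2 h3]]] := h _ m0.
  have h1e : `|d' - d| <= e by apply: le_trans h1 _; rewrite ge_min lexx.
  have h2e : `|t' - t| <= e by apply: le_trans h2 _; rewrite ge_min lexx.
  have h1d : `|d' - d| <= `|d| / 2 by apply: le_trans h1 _; rewrite ge_min lexx orbT.
  case: h3 => [d'0|[t'0 d'0]]; last by exists d', t'.
  by move: h1d; rewrite d'0 sub0r normrN; lra.
split.
  apply: eq0_small => e e0; have [d' [t' [_ h2 t0 _]]] := key e e0.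
  by rewrite t0 sub0r normrN in h2.
apply: le_small => e e0; have [d' [t' [h1 _ _ h4]]] := key e e0.
move: h1; rewrite ler_norml => /andP[h1 h2]; lra.
Qed.

Definition dist3 (a b : 'rV[R]_8 * R * R) :=
  \sum_k `|a.1.1 0 k - b.1.1 0 k| + `|a.1.2 - b.1.2| + `|a.2 - b.2|.
Definition S3 (B : R) : set ('rV[R]_8 * R * R) :=
  [set a : 'rV[R]_8 * R * R | (forall k : 'I_8, `|a.1.1 0 k| <= B) /\ `|a.1.2| <= B /\ `|a.2| <= B].

Section L3.
Variable B : R.
Hypothesis B0 : 0 <= B.

Lemma Lip3P k : LipB dist3 (S3 B) (fun a => a.1.1 0 (inord k)).
Proof.
apply: (@LipBase _ _ _ _ _ B) => //; first by move=> a [h _].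
move=> a b _ _; rewrite /dist3 -addrA (bigD1 (inord k)) //= -addrA lerDl.
apply: addr_ge0; first by apply: sumr_ge0 => j _; exact: normr_ge0.
by apply: addr_ge0; exact: normr_ge0.
Qed.

Lemma Lip3s : LipB dist3 (S3 B) (fun a => a.1.2).
Proof.
apply: (@LipBase _ _ _ _ _ B) => //; first by move=> a [_ []].
move=> a b _ _; rewrite /dist3 -addrA [X in _ <= _ + X]addrC addrA lerDr.
by apply: addr_ge0; [apply: sumr_ge0 => j _|]; exact: normr_ge0.
Qed.

Lemma Lip3i : LipB dist3 (S3 B) (fun a => a.2).
Proof.
apply: (@LipBase _ _ _ _ _ B) => //; first by move=> a [_ []].
move=> a b _ _; rewrite /dist3 lerDr.
by apply: addr_ge0; [apply: sumr_ge0 => j _|]; exact: normr_ge0.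
Qed.

Ltac lip3 := repeat first [ apply: LipC | apply: LipD | apply: LipN | apply: LipM
   | apply: Lip3P | apply: Lip3s | apply: Lip3i ].

Lemma Lip_fs : LipB dist3 (S3 B) (fun a => fs a.1.1 a.1.2 a.2).
Proof.
rewrite /fs /pb /pbeta /pbeta1 /pgamma /peps1 /peps2 /plambda /palpha /prm ?expr2; lip3.
Qed.
Lemma Lip_fi : LipB dist3 (S3 B) (fun a => fi a.1.1 a.1.2 a.2).
Proof.
rewrite /fi /pb /pbeta /pbeta1 /pgamma /peps1 /peps2 /plambda /palpha /prm ?expr2; lip3.
Qed.
Lemma Lip_det : LipB dist3 (S3 B) (fun a => Jdet a.1.1 a.1.2 a.2).
Proof.
rewrite /Jdet /J11 /J12 /J21 /J22 /pb /pbeta /pbeta1 /pgamma /peps1 /peps2 /plambda /palpha /prm; lip3.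
Qed.
Lemma Lip_tr : LipB dist3 (S3 B) (fun a => Jtr a.1.1 a.1.2 a.2).
Proof.
rewrite /Jtr /J11 /J12 /J21 /J22 /pb /pbeta /pbeta1 /pgamma /peps1 /peps2 /plambda /palpha /prm; lip3.
Qed.
End L3.

Lemma approx_pt (u v : nat -> R) :
  (forall n, (0 <= u n <= 1) /\ (0 <= v n <= 1)) ->
  exists s0 i0 : R, forall e, 0 < e -> forall N, exists2 n, (N <= n)%N &
     `|s0 - u n| < e /\ `|i0 - v n| < e.
Proof.
move=> huv.
have K : compact (`[0, 1] `*` `[0, 1] : set (R * R)).
  by apply: compact_setX; exact: segment_compact.
pose F := fmap (fun n : nat => (u n, v n)) (eventually : set_system nat).
have PF : ProperFilter F by apply: fmap_proper_filter; exact: eventually_filter.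
have FK : F (`[0, 1] `*` `[0, 1]).
  exists 0%N => // n _ /=; rewrite !in_itv /=; have [] := huv n; by split.
have [[s0 i0] [_ cl]] := K F PF FK.
exists s0, i0 => e e0 N.
have nb : nbhs (s0, i0) (ball (s0, i0) e) by apply: nbhsx_ballx.
have FN : F [set (u n, v n) | n in [set n | (N <= n)%N]].
  rewrite /F /=; exists N => // n /= Nn; by exists n.
have [[a b] [[n /= Nn [<- <-]] hb]] := cl _ _ FN nb.
by exists n.
Qed.

Lemma close_mx (C : set 'rV[R]_8) p : closure C p ->
  forall e, 0 < e -> exists q, C q /\ forall k, `|p 0 k - q 0 k| < e.
Proof.
move=> cl e e0.
have nb : nbhs p (ball p e) by apply: nbhsx_ballx.
have [q [Cq hb]] := cl _ nb.
exists q; split => // k.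
by move: hb; rewrite /ball /= => -[_ /(_ 0 k)].
Qed.

Definition Ccond (p : 'rV[R]_8) (s i : R) := fs p s i = 0 /\ fi p s i = 0 /\
  (Jdet p s i = 0 \/ (Jtr p s i = 0 /\ 0 <= Jdet p s i)).
Definition Cset := [set p : 'rV[R]_8 | exists s i, D1 (s, i) /\ Ccond p s i].

Lemma closed_C : closed Cset.
Proof.
move=> p clp.
have H : forall n : nat, exists t : 'rV[R]_8 * R * R,
    (D1 (t.1.2, t.2) /\ Ccond t.1.1 t.1.2 t.2) /\
    forall k, `|p 0 k - t.1.1 0 k| < n.+1%:R^-1.
  move=> n; have en : 0 < n.+1%:R^-1 :> R by rewrite invr_gt0 ltr0n.
  have [q [[s [i [hD hc]]] hq]] := close_mx clp en.
  by exists (q, s, i).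
have [T hT] := choice H.
have [s0 [i0 hap]] := @approx_pt (fun n => (T n).1.2) (fun n => (T n).2) (ltac:(
  move=> n; have [[[h1 [h2 h3]] _] _] := hT n; rewrite /= in h1 h2 h3 *;
  split; apply/andP; split; lra)).
have H2 : forall e, 0 < e -> exists t : 'rV[R]_8 * R * R,
    [/\ D1 (t.1.2, t.2), Ccond t.1.1 t.1.2 t.2, (forall k, `|p 0 k - t.1.1 0 k| < e),
        `|s0 - t.1.2| < e & `|i0 - t.2| < e].
  move=> e e0; pose N := Num.truncn e^-1.
  have hN : e^-1 < N.+1%:R := truncnS_gt _.
  have [n Nn [h1 h2]] := hap e e0 N.
  exists (T n); have [[hD hc] hq] := hT n; split => // k.
  apply: lt_le_trans (hq k) _.
  rewrite -[X in _ <= X]invrK lef_pV2 ?posrE ?invr_gt0 ?ltr0n //.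
  by apply: ltW; apply: lt_le_trans hN _; rewrite ler_nat.
have hD0 : D1 (s0, i0).
  rewrite /D1 /=; split; [|split].
  - apply: le_small => e e0; have [t [hD _ _ h1 _]] := H2 e e0.
    move: hD h1; rewrite /D1 /= ltr_norml => -[a [b c]] /andP[d f]; lra.
  - apply: le_small => e e0; have [t [hD _ _ _ h1]] := H2 e e0.
    move: hD h1; rewrite /D1 /= ltr_norml => -[a [b c]] /andP[d f]; lra.
  - apply: le_small => e e0; have e20 : 0 < e / 2 by apply: divr_gt0.
    have [t [hD _ _ h1 h2]] := H2 _ e20.
    move: hD h1 h2; rewrite /D1 /= !ltr_norml => -[a [b c]] /andP[d f] /andP[g h]; lra.
move: (hD0); rewrite /D1 /= => -[s00 [i00 si1]].
pose B := \sum_k `|p 0 k| + 2.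
have hpB : forall k, `|p 0 k| + 1 <= B.
  move=> k; rewrite /B (bigD1 k) //= -addrA lerD2l.
  have : 0 <= \sum_(i < 8 | i != k) `|p 0 i| by apply: sumr_ge0 => j _; exact: normr_ge0.
  lra.
have B0 : 0 <= B by have := hpB 0; have := normr_ge0 (p 0 0); lra.
have B1 : 1 <= B by have := hpB 0; have := normr_ge0 (p 0 0); lra.
have [L1 [L10 hL1]] := LipB_bound (Lip_fs B0).
have [L2 [L20 hL2]] := LipB_bound (Lip_fi B0).
have [L3 [L30 hL3]] := LipB_bound (Lip_det B0).
have [L4 [L40 hL4]] := LipB_bound (Lip_tr B0).
pose a0 : 'rV[R]_8 * R * R := (p, s0, i0).
have Sa0 : S3 B a0.
  split; first by move=> k; have := hpB k; lra.
  by rewrite /= !ger0_norm //; split; lra.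
pose L := L1 + L2 + L3 + L4 + 1.
have L0 : 0 < L by rewrite /L; lra.
have LL1 : L1 <= L by rewrite /L; lra.
have LL2 : L2 <= L by rewrite /L; lra.
have LL3 : L3 <= L by rewrite /L; lra.
have LL4 : L4 <= L by rewrite /L; lra.
have key : forall d, 0 < d -> exists t : 'rV[R]_8 * R * R, Ccond t.1.1 t.1.2 t.2 /\
    [/\ `|fs t.1.1 t.1.2 t.2 - fs p s0 i0| <= d, `|fi t.1.1 t.1.2 t.2 - fi p s0 i0| <= d,
        `|Jdet t.1.1 t.1.2 t.2 - Jdet p s0 i0| <= d & `|Jtr t.1.1 t.1.2 t.2 - Jtr p s0 i0| <= d].
  move=> d d0.
  have den0 : 0 < 10 * L + d by lra.
  pose e := d / (10 * L + d).
  have e0 : 0 < e by apply: divr_gt0.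
  have e1 : e < 1 by rewrite ltr_pdivrMr // mul1r; lra.
  have eL : 10 * L * e <= d.
    rewrite /e mulrA ler_pdivrMr //.
    have -> : d * (10 * L + d) = 10 * L * d + d * d by ring.
    by rewrite lerDl mulr_ge0 // ltW.
  have [t [hD hc hq hs hi]] := H2 e e0.
  move: (hD); rewrite /D1 /= => -[ts0 [ti0 tsi]].
  have St : S3 B t.
    split.
      move=> k; have := hq k; have := hpB k.
      have tr := ler_normD (p 0 k) (t.1.1 0 k - p 0 k).
      rewrite [p 0 k + _]addrC subrK distrC in tr; lra.
    by rewrite !ger0_norm //; split; lra.
  have dt : dist3 t a0 <= 10 * e.
    rewrite /dist3 /a0 /=.
    have : \sum_k `|t.1.1 0 k - p 0 k| <= \sum_(k < 8) e.
      by apply: ler_sum => k _; rewrite distrC; apply: ltW; exact: hq k.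
    rewrite sumr_const card_ord -mulr_natl => h8.
    move: hs hi; rewrite !(distrC s0) !(distrC i0) => hs hi; lra.
  have fin : forall Lg (g : R), 0 <= Lg -> Lg <= L -> `|g| <= Lg * dist3 t a0 -> `|g| <= d.
    move=> Lg g Lg0 LgL h; apply: le_trans h _; apply: le_trans eL.
    have dge : 0 <= dist3 t a0.
      rewrite /dist3; apply: addr_ge0; [apply: addr_ge0; [apply: sumr_ge0 => j _|]|];
      exact: normr_ge0.
    rewrite (_ : 10 * L * e = L * (10 * e)); last by ring.
    exact: ler_pM.
  exists t; split => //; split.
  - by apply: (fin L1) => //; exact: (hL1 t a0 St Sa0).
  - by apply: (fin L2) => //; exact: (hL2 t a0 St Sa0).
  - by apply: (fin L3) => //; exact: (hL3 t a0 St Sa0).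
  - by apply: (fin L4) => //; exact: (hL4 t a0 St Sa0).
exists s0, i0; split => //; split; [|split].
- apply: eq0_small => d d0; have [t [[c1 _] [h _ _ _]]] := key d d0.
  by rewrite c1 sub0r normrN in h.
- apply: eq0_small => d d0; have [t [[_ [c2 _]] [_ h _ _]]] := key d d0.
  by rewrite c2 sub0r normrN in h.
- apply: cond_closed => e e0; have [t [[_ [_ c3]] [_ _ h1 h2]]] := key e e0.
  by exists (Jdet t.1.1 t.1.2 t.2), (Jtr t.1.1 t.1.2 t.2).
Qed.

End Closed.


Section Ex.
Variable R : realType.
Definition pex : 'rV[R]_8 :=
  \row_(k < 8) nth 0 [:: 1/10; 51/10; 1/10; 1/10; 32/5; 8; 4; 1/5] k.

Lemma prm_ex k : (k < 8)%N -> prm pex k = nth 0 [:: 1/10; 51/10; 1/10; 1/10; 32/5; 8; 4; 1/5] k.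
Proof. by move=> hk; rewrite /prm /pex mxE inordK. Qed.

Lemma ex_vals : (pb pex = 1/10 /\ pbeta pex = 51/10 /\ pbeta1 pex = 1/10 /\ pgamma pex = 1/10) /\
  (peps1 pex = 32/5 /\ peps2 pex = 8 /\ plambda pex = 4 /\ palpha pex = 1/5).
Proof. by rewrite /pb /pbeta /pbeta1 /pgamma /peps1 /peps2 /plambda /palpha !prm_ex. Qed.

Lemma ex_Omega : Omega pex.
Proof.
split.
  move=> k; rewrite /pex mxE.
  case: k => [[|[|[|[|[|[|[|[|//]]]]]]]] _] /=; lra.
case: ex_vals => [[_ [-> [-> _]]] _]; lra.
Qed.

Lemma ex_rest : rest_point pex (1/4) (1/4).
Proof.
rewrite /rest_point /fs /fi.
case: ex_vals => [[-> [-> [-> ->]]] [-> [-> [-> ->]]]].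
by split; field.
Qed.
End Ex.

Lemma ex_Jdet (R : realType) : Jdet (pex R) (1/4) (1/4) = 0.
Proof.
rewrite /Jdet /J11 /J12 /J21 /J22.
case: (ex_vals R) => [[-> [-> [-> ->]]] [-> [-> [-> ->]]]].
by field.
Qed.

Theorem proposition4p4 (R : realType) :
  rel_closed (@Omega R) (@Omega1 R) /\
  (@Omega1 R) !=set0 /\
  lebesgue_null (@Omega1 R).
Proof.
split; [|split].
- split; first by move=> p [].
  exists (@Cset R); split; first exact: closed_C.
  apply/seteqP; split => p /=.
  + move=> [hO [s [i [hD [[h1 h2] nh]]]]]; split => //; exists s, i; split => //.
    by split; [|split] => //; exact: (nonhyp_iff p s i).1 nh.
  + move=> [hO [s [i [hD [h1 [h2 c]]]]]]; split => //; exists s, i; split => //.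
    by split; [split|exact: (nonhyp_iff p s i).2 c].
- exists (pex R); split; first exact: ex_Omega.
  exists (1/4), (1/4); split.
    rewrite /D1 /=; split; [|split]; lra.
  split; first exact: ex_rest.
  by apply: (nonhyp_iff _ _ _).2; left; exact: ex_Jdet.
- exact: null_Omega1.
Qed.
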